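(* Finding the minimum of a sequence of $n$ distinct elements has deterministic fragile complexity $\Theta(\log(\mathrm{Runs}))$. That is: there is a deterministic comparison-based algorithm that finds the minimum such that every element participates in $O(\log(\mathrm{Runs}))$ comparisons, where $\mathrm{Runs}$ is the number of runs of the input; and for every value $r$ there are inputs with $\mathrm{Runs}=r$ on which any deterministic comparison-based algorithm forces some element to participate in $\Omega(\log r)$ comparisons.
   Context: A run of a sequence is a maximal contiguous ascending subsequence; $\mathrm{Runs}$ is the number of runs in the input sequence. The fragile complexity of a comparison-based algorithm is the maximum, over input elements, of the number of comparisons in which the element participates; the fragile complexity of a problem is the best possible fragile complexity of any algorithm solving it. Logarithms of a parameter $r$ are understood as $\log\max(r,2)$ so that bounds are at least constant. *)

(* Defs.v *)
From mathcomp Require Import all_boot.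
Set Implicit Arguments. Unset Strict Implicit. Unset Printing Implicit Defensive.

(* A deterministic comparison-based algorithm on inputs of size n is a
   comparison (decision) tree: an internal node [Cmp i j tl tg] compares the
   input elements at positions i and j and continues in [tl] if x_i < x_j,
   in [tg] otherwise; a leaf [Leaf k] outputs position k. *)
Inductive dtree (n : nat) : Type :=
| Leaf of 'I_n
| Cmp of 'I_n & 'I_n & dtree n & dtree n.

Fixpoint output n (t : dtree n) (x : 'I_n -> nat) : 'I_n :=
  match t with
  | Leaf k => k
  | Cmp i j tl tg => if x i < x j then output tl x else output tg x
  end.

Fixpoint ncmp n (t : dtree n) (x : 'I_n -> nat) (k : 'I_n) : nat :=
  match t with
  | Leaf _ => 0
  | Cmp i j tl tg =>
      ((k == i) || (k == j)) +
      (if x i < x j then ncmp tl x k else ncmp tg x k)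
  end.

Definition fragile n (t : dtree n) (x : 'I_n -> nat) : nat :=
  \max_(k < n) ncmp t x k.

Definition finds_min n (t : dtree n) : Prop :=
  forall x : 'I_n -> nat, injective x ->
    forall j : 'I_n, x (output t x) <= x j.

(* Number of runs (maximal contiguous ascending subsequences), counted by
   their starting positions: i starts a run iff i = 0 or x_(i-1) > x_i. *)
Definition runs n (x : 'I_n -> nat) : nat :=
  #|[set i : 'I_n | (i == 0 :> nat) ||
      [exists j : 'I_n, (j.+1 == i :> nat) && (x i < x j)]]|.

(* log r understood as log max(r,2), base 2 (floor). *)
Definition lg (r : nat) : nat := trunc_log 2 (maxn r 2).

(* Main.v *)
Require Import Defs.
From mathcomp Require Import all_boot zify.
Set Implicit Arguments. Unset Strict Implicit. Unset Printing Implicit Defensive.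

Section Up.
Variable n : nat.
Local Notation N := n.+1.
Local Notation T := (dtree N).

Definition spec A (P : (A -> T) -> T) (x : 'I_N -> nat) (r : A) (c : 'I_N -> nat) :=
  forall K, output (P K) x = output (K r) x /\
            forall k, ncmp (P K) x k = c k + ncmp (K r) x k.

Fixpoint tourn (d : nat) (L : seq 'I_N) (K : 'I_N -> T) : T :=
  match d with
  | 0 => K (head ord0 L)
  | d'.+1 =>
    match drop (2 ^ d') L with
    | [::] => tourn d' (take (2 ^ d') L) K
    | L2 => tourn d' (take (2 ^ d') L)
              (fun a => tourn d' L2 (fun b => Cmp a b (K a) (K b)))
    end
  end.

Lemma tourn_spec d (L : seq 'I_N) x : 0 < size L -> size L <= 2 ^ d -> uniq L ->
  exists r c, [/\ r \in L, (forall y, y \in L -> x r <= x y),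
    (forall k, c k <= d), (forall k, k \notin L -> c k = 0) &
    spec (tourn d L) x r c].
Proof.
elim: d L => [|d IH] L L0 Ld uL.
  case: L L0 Ld uL => [|a [|b L]] //= _ _ _.
  exists a, (fun _ => 0); split; rewrite ?inE ?eqxx //.
  all: try by move=> y; rewrite inE => /eqP ->.
  all: try by move=> K; split.
have L10 : 0 < size (take (2 ^ d) L).
  by rewrite size_take; case: ifP => //; rewrite expn_gt0.
have L1d : size (take (2 ^ d) L) <= 2 ^ d.
  by rewrite size_take; case: ifP => // /negbT; rewrite -leqNgt.
have uL1 : uniq (take (2 ^ d) L) by apply: take_uniq.
have [r1 [c1 [r1L min1 c1d c1L sp1]]] := IH _ L10 L1d uL1.
rewrite /=.
case E: (drop (2 ^ d) L) => [|b L2'].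
  have eL : take (2 ^ d) L = L by rewrite -[RHS](cat_take_drop (2 ^ d)) E cats0.
  rewrite eL in r1L min1 c1L.
  exists r1, c1; split => //.
  all: try by move=> k; have := c1d k; lia.
  all: try by move=> K /=; rewrite E; apply: sp1.
set L2 := b :: L2'.
have L20 : 0 < size L2 by [].
have L2d : size L2 <= 2 ^ d.
  rewrite /L2 -E size_drop; move: Ld; rewrite expnS; lia.
have uL2 : uniq L2 by rewrite /L2 -E; apply: drop_uniq.
have [r2 [c2 [r2L min2 c2d c2L sp2]]] := IH _ L20 L2d uL2.
have eL : L = take (2 ^ d) L ++ L2 by rewrite /L2 -E cat_take_drop.
have disj : forall k, k \in take (2 ^ d) L -> k \notin L2.
  move: uL; rewrite {1}eL cat_uniq => /and3P [_ H _] k kL1.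
  apply/negP => kL2; move/hasP: H; apply; exists k => //.
have memL : forall k, (k \in L) = (k \in take (2 ^ d) L) || (k \in L2).
  by move=> k; rewrite {1}eL mem_cat.
exists (if x r1 < x r2 then r1 else r2).
exists (fun k => c1 k + c2 k + ((k == r1) || (k == r2))).
split.
- by case: ifP => _; rewrite memL ?r1L ?r2L ?orbT.
- move=> y; rewrite memL => /orP [] yL.
    case: ifP => h; first exact: min1.
    have := min1 _ yL; lia.
  case: ifP => h; last exact: min2.
  have := min2 _ yL; lia.
- move=> k.
  case kL1: (k \in take (2 ^ d) L).
    have := disj _ kL1 => /c2L ->.
    have : k != r2 by apply/eqP => e; move: (disj _ kL1); rewrite e r2L.
    move/negbTE => ->; rewrite orbF addn0.
    have := c1d k; case: (k == r1) => /=; lia.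
  have e1 : c1 k = 0 by apply: c1L; rewrite kL1.
  have : k != r1 by apply/eqP => e; move: kL1; rewrite e r1L.
  move/negbTE => ->; rewrite e1 /=.
  have := c2d k; case: (k == r2) => /=; lia.
- move=> k; rewrite memL negb_or => /andP [k1 k2].
  rewrite c1L // c2L //.
  have -> : k == r1 = false by apply/negbTE; apply/eqP => e; move: k1; rewrite e r1L.
  by have -> : k == r2 = false by apply/negbTE; apply/eqP => e; move: k2; rewrite e r2L.
- move=> K /=.
  have [o1 n1] := sp1 (fun a => tourn d L2 (fun b0 => Cmp a b0 (K a) (K b0))).
  have [o2 n2] := sp2 (fun b0 => Cmp r1 b0 (K r1) (K b0)).
  split.
    by rewrite o1 o2 /=; case: ifP.
  move=> k; rewrite n1 n2 /=.
  case: ifP => _; lia.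
Qed.


Fixpoint scan (l : seq nat) (acc : seq 'I_N) (K : seq 'I_N -> T) : T :=
  match l with
  | [::] => K acc
  | i :: l' => Cmp (inord i) (inord i.-1) (scan l' (rcons acc (inord i)) K)
                                          (scan l' acc K)
  end.

Definition filt (x : 'I_N -> nat) (l : seq nat) : seq 'I_N :=
  [seq inord i | i <- l & x (inord i) < x (inord i.-1)].

Definition scost (l : seq nat) (k : 'I_N) :=
  count (fun i => (k == inord i) || (k == inord i.-1)) l.

Lemma scan_spec l acc x : spec (scan l acc) x (acc ++ filt x l) (scost l).
Proof.
elim: l acc => [|i l IH] acc K /=.
  by rewrite cats0; split.
rewrite /filt /=.
case: ifP => h.
  have [o c] := IH (rcons acc (inord i)) K.
  split; first by rewrite o -cats1 -catA.
  by move=> k; rewrite c /scost /= -cats1 -catA addnA.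
have [o c] := IH acc K.
split; first by rewrite o.
by move=> k; rewrite c /scost /= addnA.
Qed.

Lemma count_eq_le1 (s : seq nat) (m : nat) : uniq s -> count (fun i => m == i) s <= 1.
Proof.
move=> u; have := count_uniq_mem m u.
rewrite (eq_count (a2 := fun i => m == i)) => [->|i]; first by case: (m \in s).
by rewrite /= eq_sym.
Qed.

Lemma scost_le2 k : scost (iota 1 n) k <= 2.
Proof.
rewrite /scost.
have := count_predUI (fun i => k == inord i :> 'I_N) (fun i => k == inord i.-1 :> 'I_N) (iota 1 n).
have h1 : count (fun i => k == inord i :> 'I_N) (iota 1 n) <= 1.
  rewrite -(eq_in_count (a1 := fun i => val k == i)).
    by apply: count_eq_le1; apply: iota_uniq.
  move=> i; rewrite mem_iota => /andP [_ hi] /=.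
  by rewrite -(inj_eq val_inj) /= inordK //; lia.
have h2 : count (fun i => k == inord i.-1 :> 'I_N) (iota 1 n) <= 1.
  rewrite -(eq_in_count (a1 := fun i => val k == i.-1)); last first.
    move=> i; rewrite mem_iota => /andP [_ hi] /=.
    by rewrite -(inj_eq val_inj) /= inordK //; lia.
  have -> : iota 1 n = map (addn 1) (iota 0 n) by rewrite -iotaDl.
  rewrite count_map.
  rewrite (eq_count (a2 := fun i => val k == i)); last by move=> i /=.
  by apply: count_eq_le1; apply: iota_uniq.
set c1 := count _ (iota 1 n) in h1 *. set c2 := count _ (iota 1 n) in h2 *.
rewrite (eq_count (a1 := [pred x | _]) (a2 := fun i => (k == inord i) || (k == inord i.-1))) //. lia.
Qed.


Definition alg : T :=
  scan (iota 1 n) [:: ord0] (fun S => tourn (trunc_log 2 (size S)).+1 S (@Leaf N)).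

Section S.
Variable x : 'I_N -> nat.
Hypothesis ix : injective x.
Let S := ord0 :: filt x (iota 1 n).

Lemma memS s : s \in S ->
  s = ord0 \/ exists i, [/\ 1 <= i <= n, s = inord i & x (inord i) < x (inord i.-1)].
Proof.
rewrite inE => /orP [/eqP ->|]; first by left.
rewrite /filt => /mapP [i]; rewrite mem_filter mem_iota => /andP [h1 h2] ->.
right; exists i; split => //; lia.
Qed.

Lemma uniqS : uniq S.
Proof.
apply: (@map_uniq _ _ val).
have -> : map val S = 0 :: [seq i <- iota 1 n | x (inord i) < x (inord i.-1)].
  rewrite /= /filt -map_comp; congr (_ :: _).
  rewrite -[RHS]map_id; apply/eq_in_map => i.
  rewrite mem_filter mem_iota => /andP [_ h] /=; rewrite inordK //; lia.
rewrite /= filter_uniq ?iota_uniq // andbT mem_filter mem_iota; lia.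
Qed.

Definition runset := [set i : 'I_N | (i == 0 :> nat) ||
      [exists j : 'I_N, (j.+1 == i :> nat) && (x i < x j)]].

Lemma size_S : size S <= runs x.
Proof.
rewrite /runs -/runset cardE; apply: uniq_leq_size; first exact: uniqS.
move=> s /memS [->|[i [hi -> hx]]]; rewrite mem_enum inE; first by [].
apply/orP; right; apply/existsP; exists (inord i.-1).
rewrite hx andbT !inordK //; lia.
Qed.

Lemma minS j : exists2 s, s \in S & x s <= x j.
Proof.
case: (arg_minnP x (isT : predT ord0)) => m _ hm.
exists m; last by apply: hm.
case e: (val m == 0).
  by rewrite inE; apply/orP; left; apply/eqP; apply: val_inj; apply/eqP.
have e' : val m <> 0 by apply/eqP; rewrite e.
rewrite inE; apply/orP; right; apply/mapP; exists (val m).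
  rewrite mem_filter mem_iota.
  have lm : val m < n.+1 by exact: ltn_ord m.
  have em : inord (val m) = m by apply: val_inj; rewrite /= inordK.
  rewrite em; apply/andP; split; last by lia.
  have ne : inord (val m).-1 != m.
    apply/eqP => h; move: (f_equal val h); rewrite /= inordK; simpl in *; lia.
  have := hm (inord (val m).-1) isT.
  rewrite leq_eqVlt => /orP [/eqP h|//].
  by move: ne; rewrite -(ix h) eqxx.
by apply: val_inj; rewrite /= inordK.
Qed.

Lemma lg_ge1 r : 1 <= lg r.
Proof.
rewrite /lg; have := leq_trunc_log 2 (leq_maxr r 2).
by rewrite trunc_lognn.
Qed.


Lemma alg_spec : (forall j, x (output alg x) <= x j) /\
                 (forall k, ncmp alg x k <= 4 * lg (runs x)).
Proof.
rewrite /alg.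
have [o1 n1] := scan_spec (iota 1 n) [:: ord0] x
   (fun S => tourn (trunc_log 2 (size S)).+1 S (@Leaf N)).
rewrite cat1s -/S in o1 n1.
have S0 : 0 < size S by [].
have Sd : size S <= 2 ^ (trunc_log 2 (size S)).+1.
  exact: ltnW (trunc_log_ltn _ (isT : 1 < 2)).
have [r [c [rS rmin cd c0 sp]]] := tourn_spec x S0 Sd uniqS.
have [o2 n2] := sp (@Leaf N).
split.
  move=> j; rewrite o1 o2 /=.
  have [s sS sj] := minS j.
  exact: leq_trans (rmin _ sS) sj.
move=> k; rewrite n1 n2 /= addn0.
have h1 := scost_le2 k.
have h2 := cd k.
have h3 : trunc_log 2 (size S) <= lg (runs x).
  apply: leq_trunc_log; apply: leq_trans size_S (leq_maxl _ _).
have := lg_ge1 (runs x); lia.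
Qed.

End S.

End Up.

Section Low.
Variable N : nat.
Local Notation T := (dtree N).

Definition rk (D : seq 'I_N) (u : 'I_N) := if u \in D then (index u D).+1 else 0.

Definition consis (D : seq 'I_N) (x : 'I_N -> nat) :=
  forall u v, rk D u < rk D v -> x u < x v.

Definition inv (D : seq 'I_N) (w c : 'I_N -> nat) (r : nat) :=
  (forall a, a \notin D -> w a <= 2 ^ c a) /\ \sum_(a | a \notin D) w a = r.

Definition mono (D D1 : seq 'I_N) := forall u v, rk D u < rk D v -> rk D1 u < rk D1 v.

Lemma rk_eq D (i j : 'I_N) : rk D i = rk D j -> i != j -> i \notin D /\ j \notin D.
Proof.
rewrite /rk; case iD: (i \in D); case jD: (j \in D) => //= e ne.
case: e => e.
by move: ne; rewrite -(nth_index i iD) e (nth_index i jD) eqxx.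
Qed.

Lemma rk_cons D (j u : 'I_N) : j \notin D ->
  rk (j :: D) u = if u == j then 1 else rk D u + (u \in D).
Proof.
move=> jD; rewrite /rk in_cons /= eq_sym.
case: (eqVneq u j) => [->|ne] /= //.
by case: (u \in D) => //=; rewrite addn1.
Qed.

Lemma mono_cons D (j : 'I_N) : j \notin D -> mono D (j :: D).
Proof.
move=> jD u v h; rewrite !rk_cons //.
have vD : v \in D by move: h; rewrite /rk; case: (v \in D).
have vj : (v == j) = false by apply/negbTE; apply/eqP => e; move: jD; rewrite -e vD.
rewrite vj vD; case: (u == j); first by move: h; rewrite /rk vD; lia.
by move: h; rewrite /rk vD; case: (u \in D) => /=; lia.
Qed.

Lemma merge D (w c : 'I_N -> nat) r (i j : 'I_N) : i \notin D -> j \notin D -> i != j ->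
  w j <= w i -> inv D w c r ->
  let w1 := fun a => if a == i then w i + w j else w a in
  [/\ inv (j :: D) w1 (fun a => c a + ((a == i) || (a == j))) r,
      mono D (j :: D) & rk (j :: D) i < rk (j :: D) j].
Proof.
move=> iD jD ij wji [hw hs] w1; split; last first.
- by rewrite !rk_cons // eqxx (negbTE ij) (negbTE iD) /rk (negbTE iD).
- exact: mono_cons.
rewrite /inv; split.
  move=> a; rewrite in_cons negb_or => /andP [aj aD].
  rewrite /w1; case: (eqVneq a i) => [->|ai] /=.
    rewrite addn1 expnS; have := hw _ iD; lia.
  rewrite (negbTE aj) addn0; exact: hw.
rewrite -hs [RHS](bigD1 i) //= (bigD1 j (P := fun a => (a \notin D) && (a != i))) /=; last by rewrite jD eq_sym.
rewrite /w1 [LHS](bigD1 i) /=; last by rewrite in_cons negb_or iD andbT; apply: contraNneq ij => ->.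
rewrite eqxx -addnA; congr (_ + (_ + _)).
apply: eq_big => a.
  by rewrite in_cons negb_or; case: (a == j); case: (a \in D); case: (a == i).
by move=> /andP [_ /negbTE ->].
Qed.

Lemma step D (w c : 'I_N -> nat) r (i j : 'I_N) : inv D w c r ->
  exists b D1 w1, [/\ inv D1 w1 (fun a => c a + ((a == i) || (a == j))) r,
     mono D D1 & forall x, consis D1 x -> (x i < x j) = b].
Proof.
move=> [hw hs].
have inv0 : inv D w (fun a => c a + ((a == i) || (a == j))) r.
  split => // a aD; apply: leq_trans (hw _ aD) _; apply: leq_pexp2l => //; lia.
case: (ltngtP (rk D i) (rk D j)) => h.
- by exists true, D, w; split => // x hx; apply: hx.
- exists false, D, w; split => // x hx; apply/negbTE; rewrite -leqNgt; apply: ltnW; exact: hx.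
case: (eqVneq i j) => [eij|ij]; first subst j.
  by exists false, D, w; split => // x _; rewrite ltnn.
have [iD jD] := rk_eq h ij.
case: (leqP (w j) (w i)) => wij.
  have [inv1 m1 r1] := merge iD jD ij wij (conj hw hs).
  by eexists true, _, _; split; [exact: inv1 | exact: m1 | move=> x hx; apply: hx].
have ji : j != i by rewrite eq_sym.
have [[hw1 hs1] m1 r1] := merge jD iD ji (ltnW wij) (conj hw hs).
eexists false, _, _; split; [split; last exact: hs1| exact: m1 |].
  by move=> a /hw1; rewrite orbC.
move=> x hx; apply/negbTE; rewrite -leqNgt; apply: ltnW; exact: hx.
Qed.

Lemma adv (t : T) : forall D w c r, inv D w c r ->
  exists D' w' c' o, [/\ inv D' w' c' r, mono D D' &
    forall x, consis D' x -> output t x = o /\ forall k, c k + ncmp t x k = c' k].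
Proof.
elim: t => [o|i j tl IHl tg IHg] D w c r hinv.
  exists D, w, c, o; split => // x _; split => // k; by rewrite addn0.
have [b [D1 [w1 [inv1 m1 hb]]]] := step i j hinv.
have mt : forall D2, mono D1 D2 -> mono D D2 by move=> D2 m2 u v h; apply: m2; apply: m1.
have ct : forall D2 x, mono D1 D2 -> consis D2 x -> consis D1 x.
  by move=> D2 x m2 hx u v h; apply: hx; apply: m2.
case: b hb => hb.
  have [D' [w' [c' [o [inv' m' h']]]]] := IHl D1 w1 _ r inv1.
  exists D', w', c', o; split => //; first exact: mt.
  move=> x hx; have [ho hn] := h' x hx.
  by rewrite /= (hb x (ct _ _ m' hx)); split => // k; rewrite -hn addnA.
have [D' [w' [c' [o [inv' m' h']]]]] := IHg D1 w1 _ r inv1.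
exists D', w', c', o; split => //; first exact: mt.
move=> x hx; have [ho hn] := h' x hx.
by rewrite /= (hb x (ct _ _ m' hx)); split => // k; rewrite -hn addnA.
Qed.

Lemma build D (a : 'I_N) : a \notin D ->
  exists x : 'I_N -> nat, [/\ injective x, consis D x & forall u, u != a -> x a < x u].
Proof.
move=> aD.
pose s (u : 'I_N) := if u == a then 0 else (val u).+1.
have sl : forall u, s u < N.+1 by move=> u; rewrite /s; case: ifP => // _; rewrite ltnS ltn_ord.
exists (fun u => rk D u * N.+1 + s u); split.
- move=> u v e.
  have : (rk D u * N.+1 + s u) %% N.+1 = (rk D v * N.+1 + s v) %% N.+1 by rewrite e.
  rewrite !modnMDl !modn_small // /s.
  case: (eqVneq u a) => [->|ua]; case: (eqVneq v a) => [->|va] //.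
  by move=> [] h; apply: val_inj.
- move=> u v h.
  have h1 := sl u.
  have h2 : (rk D u).+1 * N.+1 <= rk D v * N.+1 by rewrite leq_mul2r h orbT.
  move: h2; rewrite mulSn; lia.
- move=> u ua; rewrite /rk (negbTE aD) /s eqxx (negbTE ua); lia.
Qed.

End Low.

Lemma evens_sum N r : N = r.*2 -> \sum_(a < N | ~~ odd a) 1 = r.
Proof.
move=> ->; rewrite -(big_mkord (fun a => ~~ odd a) (fun _ => 1)) big_mkcond /=.
elim: r => [|r IH]; first by rewrite big_geq.
rewrite doubleS !big_nat_recr //= IH odd_double /=; lia.
Qed.

Lemma runs_evens n r (x : 'I_n.+1 -> nat) : n.+1 = r.*2 ->
  (forall u v : 'I_n.+1, ~~ odd u -> odd v -> x u < x v) -> runs x = r.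
Proof.
move=> eN hx.
rewrite /runs.
have -> : [set i : 'I_n.+1 | (i == 0 :> nat) ||
      [exists j : 'I_n.+1, (j.+1 == i :> nat) && (x i < x j)]] = [set i : 'I_n.+1 | ~~ odd i].
  apply/setP => i; rewrite !inE.
  case oi: (odd i) => /=.
    have -> : (i == 0 :> nat) = false by apply/negbTE; apply/eqP => e; move: oi; rewrite e.
    apply/negbTE/existsP => [[j /andP [/eqP ej h]]].
    have oj : ~~ odd j by move: oi; rewrite -ej /=; case: (odd j).
    by have := hx _ _ oj oi; lia.
  case: (eqVneq (i : nat) 0) => [->//|ine] /=.
  have lj : (i : nat).-1 < n.+1 by have := ltn_ord i; lia.
  apply/existsP; exists (Ordinal lj) => /=.
  apply/andP; split; first by apply/eqP; lia.
  apply: hx; first by rewrite oi.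
  have : odd i = odd ((i : nat).-1).+1 by congr odd; lia.
  by rewrite oi /=; case: (odd _).
rewrite -sum1_card -(evens_sum eN); apply: eq_bigl => i; by rewrite inE.
Qed.

Lemma frag_ge1 n (t : dtree n.+1) : 0 < n -> finds_min t -> forall x, 1 <= fragile t x.
Proof.
move=> n0; case: t => [o|i j tl tg] hA x.
  pose y (u : 'I_n.+1) := if u == o then n.+1 else (u : nat).
  have iy : injective y.
    move=> u v; rewrite /y.
    case: (eqVneq u o) => [->|uo]; case: (eqVneq v o) => [->|vo] //.
    - by have := ltn_ord v; lia.
    - by have := ltn_ord u; lia.
    - by move=> h; apply: val_inj.
  pose j : 'I_n.+1 := if o == ord_max then ord0 else ord_max.
  have jo : j != o.
    rewrite /j; case: (eqVneq o ord_max) => [->|ne]; last by rewrite eq_sym.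
    by apply/eqP => h; move: (f_equal val h) => /=; lia.
  have := hA y iy j; rewrite /= /y eqxx (negbTE jo).
  by have := ltn_ord j; lia.
apply: leq_trans (leq_bigmax i); rewrite /= eqxx; lia.
Qed.

Lemma lower (A : forall n : nat, dtree n.+1) : (forall n, finds_min (A n)) ->
  forall r : nat, 0 < r ->
    exists n (x : 'I_n.+1 -> nat),
      [/\ injective x, runs x = r & lg r <= 1 * fragile (A n) x].
Proof.
move=> hA r r0.
set n := (r.*2).-1.
have eN : n.+1 = r.*2 by rewrite /n; lia.
exists n.
pose D0 := filter (fun u : 'I_n.+1 => odd u) (enum 'I_n.+1).
have memD0 : forall u, (u \in D0) = odd u by move=> u; rewrite mem_filter mem_enum andbT.
have inv0 : inv D0 (fun _ => 1) (fun _ => 0) r.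
  split => //; rewrite -(evens_sum eN); apply: eq_bigl => u; by rewrite memD0.
have [D' [w' [c' [o [[hw' hs'] m' h']]]]] := adv (A n) inv0.
have alive : forall a, a \notin D' -> a = o.
  move=> a aD; have [x [ix cx mx]] := build aD.
  have [ho _] := h' x cx.
  have := hA n x ix a; rewrite ho.
  case: (eqVneq a o) => [//|ne].
  by have := mx o (negbT (introF eqP (fun e => (elimN eqP ne) (esym e)))); lia.
have oD : o \notin D'.
  case: (pickP (fun a => a \notin D')) => [a aD|none].
    by rewrite -(alive _ aD).
  move: hs'; rewrite big_pred0 //; lia.
have sumo : w' o = r.
  rewrite -hs' (big_pred1 o) // => a /=.
  apply/idP/eqP => [/alive //|->//].
have [x [ix cx _]] := build oD.
exists x; split => //.
  apply: (runs_evens eN) => u v hu hv.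
  have cx0 : consis D0 x by move=> a b h; apply: cx; apply: m'.
  apply: cx0; rewrite /rk !memD0 (negbTE hu) hv; lia.
have [_ hn] := h' x cx.
have h1 : ncmp (A n) x o <= fragile (A n) x by apply: (leq_bigmax o).
have f1 : 1 <= fragile (A n) x by apply: frag_ge1 => //; rewrite /n; lia.
set f := fragile (A n) x in h1 f1 *.
have rf : r <= 2 ^ f.
  rewrite -sumo; apply: leq_trans (hw' _ oD) _.
  rewrite -(hn o) add0n; apply: leq_pexp2l => //.
rewrite mul1n /lg.
have : maxn r 2 <= 2 ^ f.
  rewrite geq_max rf /=.
  by have := leq_pexp2l (isT : 0 < 2) f1; rewrite expn1.
move/(leq_trunc_log 2); rewrite trunc_expnK //.
Qed.

Theorem theorem5 :
  (* upper bound: an algorithm (family of comparison trees, one per input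
     size n+1) finding the minimum with fragile complexity O(log Runs) *)
  (exists (C : nat) (A : forall n : nat, dtree n.+1),
      (forall n, finds_min (A n)) /\
      (forall n (x : 'I_n.+1 -> nat), injective x ->
         fragile (A n) x <= C * lg (runs x)))
  /\
  (* lower bound: Omega(log r) for every r *)
  (exists d : nat, 0 < d /\
      forall A : forall n : nat, dtree n.+1,
        (forall n, finds_min (A n)) ->
        forall r : nat, 0 < r ->
          exists n (x : 'I_n.+1 -> nat),
            [/\ injective x, runs x = r & lg r <= d * fragile (A n) x]).
Proof.
split.
  exists 4, alg; split.
    by move=> n x ix j; exact: (alg_spec ix).1.
  move=> n x ix; apply/bigmax_leqP => k _; exact: (alg_spec ix).2 k.
exists 1; split => //.
move=> A hA r r0; have := lower hA r0. done.
Qed.
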